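(* For every positive integer $L$, every $Y\ge1$ and every $\varepsilon>0$, \[ S(L,Y):=\sum_{\substack{\ell\mid L^\infty\\ \ell\le Y}}\frac{\ell}{\nu(\ell)^2}\Big(\sum_{d\mid\ell}c_\ell(d)d^{1/2}\Big)^2\ll_\varepsilon Y^{\varepsilon}\tau(L), \] where $\tau$ is the divisor function.
   Context: $\nu$ is the completely multiplicative function with $\nu(p)=p+1$ for primes $p$. $\ell\mid L^\infty$ means every prime factor of $\ell$ divides $L$. The Chebyshev coefficients $c_{j,n}$ are defined by $x^n=\sum_{j=0}^n c_{j,n}U_j(x/2)$, with $U_j$ the Chebyshev polynomials of the second kind; for $d\mid\ell$, $c_\ell(d)=\prod_{p\mid\ell}c_{j_p,n_p}$ where $p^{j_p}\|d$, $p^{n_p}\|\ell$. *)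

(* Defs.v *)
From Stdlib Require Import Reals ClassicalEpsilon.
From mathcomp Require Import all_boot.

Set Implicit Arguments.
Unset Strict Implicit.
Unset Printing Implicit Defensive.

Open Scope R_scope.

(* chebV j x = U_j(x/2): V_0 = 1, V_1 = x, V_{j+2} = x V_{j+1} - V_j. *)
Fixpoint chebV (j : nat) (x : R) : R :=
  match j with
  | O => 1
  | S j' => match j' with
            | O => x
            | S j'' => x * chebV j' x - chebV j'' x
            end
  end.

Definition cheb_coeffs (n : nat) : nat -> R :=
  epsilon (inhabits (fun _ : nat => 0))
    (fun c : nat -> R => forall x : R, x ^ n = sum_f_R0 (fun j => c j * chebV j x) n).

Definition cheb (j n : nat) : R := if (j <= n)%nat then cheb_coeffs n j else 0.

Definition nu (l : nat) : nat := \prod_(p <- primes l) (p.+1) ^ (logn p l).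

Definition c_ell (l d : nat) : R :=
  foldr Rmult 1 (map (fun p => cheb (logn p d) (logn p l)) (primes l)).

(* l | L^oo : every prime factor of l divides L *)
Definition divides_pow_inf (l L : nat) : bool := all (fun p => p %| L) (primes l).

Definition inner_sum (l : nat) : R :=
  foldr Rplus 0 (map (fun d => c_ell l d * sqrt (INR d)) (divisors l)).

Definition ell_range (L : nat) (Y : R) : seq nat :=
  [seq l <- iota 1 (Z.to_nat (up Y)) |
     divides_pow_inf l L && (if Rle_dec (INR l) Y then true else false)].

Definition S_sum (L : nat) (Y : R) : R :=
  foldr Rplus 0
    (map (fun l => INR l / (INR (nu l))^2 * (inner_sum l)^2) (ell_range L Y)).

Definition tau (n : nat) : nat := size (divisors n).

(* Main.v *)
Require Import Defs.
From Stdlib Require Import Reals Lra ZArith ClassicalEpsilon.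
From mathcomp Require Import all_boot.
From mathcomp Require Import Rstruct.
From mathcomp Require Import zify.
Open Scope R_scope.


Fixpoint ee (j n : nat) {struct n} : nat :=
  match n with
  | O => (j == 0)%N
  | S n' => ((match j with O => O | S j' => ee j' n' end) + ee j.+1 n')%N
  end.

Lemma ee_gt n j : (n < j)%N -> ee j n = 0%N.
Proof.
elim: n j => [|n IH] [|j] //= H.
rewrite !IH //; lia.
Qed.

Lemma chebV_x x j : x * chebV j x = chebV j.+1 x + (match j with O => 0 | S j' => chebV j' x end).
Proof. case: j => [|j] /=; first ring. case: j => [|j] /=; ring. Qed.

Lemma shiftS (f : nat -> R) n N :
  \big[Rplus/0]_(j < N.+1) (INR (ee j n.+1) * f j) =
  \big[Rplus/0]_(j < N) (INR (ee j n) * f j.+1) + \big[Rplus/0]_(j < N.+1) (INR (ee j.+1 n) * f j).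
Proof.
rewrite (eq_bigr (fun j : 'I_N.+1 => INR (match (j:nat) with O => O | S j' => ee j' n end) * f j + INR (ee j.+1 n) * f j)); last first.
  by move=> j _; rewrite /= plus_INR; ring.
rewrite big_split /= big_ord_recl /=; rewrite Rmult_0_l Rplus_0_l; done.
Qed.

Lemma cheb_identity x n N : (n < N)%N ->
  x ^ n = \big[Rplus/0]_(j < N) (INR (ee j n) * chebV j x).
Proof.
elim: n N => [|n IH] N HN.
  case: N HN => [//|N] _; rewrite big_ord_recl /= big1 /=; first ring.
  by move=> i _; rewrite Rmult_0_l.
case: N HN => [//|[|K]] HN //.
rewrite (shiftS (fun j => chebV j x)).
have HK : (n < K.+1)%N by [].
rewrite /= (IH _ HK) big_distrr /=.
rewrite (eq_bigr (fun j : 'I_K.+1 => INR (ee j n) * chebV j.+1 x + INR (ee j n) * (match (j:nat) with O => 0 | S j' => chebV j' x end))); last first.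
  by move=> j _; rewrite -Rmult_assoc (Rmult_comm x) Rmult_assoc chebV_x; ring.
rewrite big_split /=; congr (_ + _).
rewrite big_ord_recl /= Rmult_0_r Rplus_0_l.
rewrite big_ord_recr big_ord_recr /= !ee_gt //; try lia.
rewrite /= !Rmult_0_l !Rplus_0_r; done.
Qed.

Lemma chebV_mono x j : 2 <= x ->
  1 <= chebV j x /\ chebV j x <= chebV j.+1 x /\ (x - 1) * chebV j x <= chebV j.+1 x.
Proof.
move=> Hx; elim: j => [|j [H1 [H2 H3]]]; first by rewrite /=; repeat split; lra.
split; first lra.
have -> : chebV j.+2 x = x * chebV j.+1 x - chebV j x by [].
split; nra.
Qed.

Lemma chebV_le x j k : 2 <= x -> (j <= k)%N -> chebV j x <= chebV k x.
Proof.
move=> Hx; elim: k => [|k IH]; first by rewrite leqn0 => /eqP ->; lra.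
rewrite leq_eqVlt => /orP [/eqP -> | H]; first lra.
have := chebV_mono x k Hx; have := IH H; lra.
Qed.

Lemma sum_bound (a : nat -> R) x M K : 2 <= x -> (K <= M.+1)%N ->
  Rabs (\big[Rplus/0]_(j < K) (a j * chebV j x)) <= (\big[Rplus/0]_(j < K) Rabs (a j)) * chebV M x.
Proof.
move=> Hx; elim: K => [|K IH] HK.
  rewrite !big_ord0 Rabs_R0; lra.
rewrite !big_ord_recr /=.
have H1 := IH (ltnW HK).
have H2 : chebV K x <= chebV M x by apply: chebV_le.
have H3 := proj1 (chebV_mono x K Hx).
have H4 : Rabs (a K * chebV K x) <= Rabs (a K) * chebV M x.
  rewrite Rabs_mult (Rabs_right (chebV K x)); last lra.
  apply: Rmult_le_compat_l; [apply: Rabs_pos | lra].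
have := Rabs_triang (\big[Rplus/0]_(j < K) (a j * chebV j x)) (a K * chebV K x).
set S := \big[Rplus/0]_(j < K) (a j * chebV j x) in H1 *. set T := \big[Rplus/0]_(j < K) Rabs (a j) in H1 *. rewrite Rmult_plus_distr_r; lra.
Qed.

Lemma uniq0 N (a : nat -> R) :
  (forall x, \big[Rplus/0]_(j < N) (a j * chebV j x) = 0) -> forall j, (j < N)%N -> a j = 0.
Proof.
elim: N a => [|N IH] a H j Hj //.
have HaN : a N = 0.
  case: N IH H Hj => [|M] IH H Hj.
    have := H 0; rewrite big_ord_recl big_ord0 /=; lra.
  destruct (Req_dec (a M.+1) 0) as [|Hne]; first done; exfalso.
  set A := \big[Rplus/0]_(j < M.+1) Rabs (a j).
  have HA : 0 <= A.
    rewrite /A; apply: big_ind => //; [lra| move=> u v; lra | move=> i _; apply: Rabs_pos].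
  have Hpos : 0 < Rabs (a M.+1) by apply: Rabs_pos_lt.
  set x := 2 + A / Rabs (a M.+1).
  have Hx : 2 <= x.
    rewrite /x; have : 0 <= A / Rabs (a M.+1) by apply: Rmult_le_pos; [done | left; apply: Rinv_0_lt_compat].
    lra.
  have Hs : \big[Rplus/0]_(j < M.+1) (a j * chebV j x) + a M.+1 * chebV M.+1 x = 0.
    by move: (H x); rewrite big_ord_recr; exact: id.
  have Hb := sum_bound a x M M.+1 Hx (leqnn _); rewrite -/A in Hb.
  have Heq : \big[Rplus/0]_(j < M.+1) (a j * chebV j x) = - (a M.+1 * chebV M.+1 x) by lra.
  rewrite Heq Rabs_Ropp Rabs_mult (Rabs_right (chebV M.+1 x)) in Hb; last first.
    have := proj1 (chebV_mono x M.+1 Hx); lra.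
  have [H1 [H2 H3]] := chebV_mono x M Hx.
  have Hxa : (x - 1) * Rabs (a M.+1) = Rabs (a M.+1) + A.
    rewrite /x; field; lra.
  nra.
have H' : forall x, \big[Rplus/0]_(j < N) (a j * chebV j x) = 0.
  by move=> x; have := H x; rewrite big_ord_recr /= HaN Rmult_0_l Rplus_0_r.
move: Hj; rewrite ltnS leq_eqVlt => /orP [/eqP -> // | Hj].
exact: IH H' j Hj.
Qed.

Lemma sum_f_R0_big (f : nat -> R) n : sum_f_R0 f n = \big[Rplus/0]_(j < n.+1) f j.
Proof.
elim: n => [|n IH]; first by rewrite big_ord_recr big_ord0 /= Rplus_0_l.
by rewrite big_ord_recr /= -IH.
Qed.

Lemma big_sub (f g : nat -> R) N :
  \big[Rplus/0]_(j < N) (f j - g j) = \big[Rplus/0]_(j < N) f j - \big[Rplus/0]_(j < N) g j.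
Proof.
rewrite (eq_bigr (fun j : 'I_N => f j + (-1) * g j)); last by move=> *; ring.
rewrite big_split -big_distrr /=; ring.
Qed.

Lemma cheb_ee j n : cheb j n = INR (ee j n).
Proof.
rewrite /cheb; case: ifP => Hjn; last by rewrite ee_gt // ltnNge Hjn.
rewrite /cheb_coeffs.
set P := (fun c : nat -> R => forall x : R, x ^ n = sum_f_R0 (fun j => c j * chebV j x) n).
have Hex : exists c, P c.
  exists (fun j => INR (ee j n)) => x; rewrite sum_f_R0_big; exact: cheb_identity.
have Hc := epsilon_spec (inhabits (fun _ : nat => 0)) P Hex.
set c := epsilon _ P in Hc *.
have := @uniq0 n.+1 (fun j => c j - INR (ee j n)).
move=> /(_ _ j Hjn) H; apply: Rminus_diag_uniq; apply: H => x.
rewrite (eq_bigr (fun j : 'I_n.+1 => c j * chebV j x - INR (ee j n) * chebV j x)); last by move=> i _; ring.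
rewrite (big_sub (fun j => c j * chebV j x) (fun j => INR (ee j n) * chebV j x)) -(sum_f_R0_big (fun j => c j * chebV j x)) -Hc -cheb_identity //; ring.
Qed.


Lemma big_ge0 (I : Type) (r : seq I) (F : I -> R) :
  (forall i, 0 <= F i) -> 0 <= \big[Rplus/0]_(i <- r) F i.
Proof. move=> H; apply: big_ind => //; [lra | move=> u v; lra]. Qed.

Lemma G_bound s n N : 0 < s -> (n < N)%N ->
  \big[Rplus/0]_(j < N) (INR (ee j n) * s ^ j) <= (s + / s) ^ n.
Proof.
move=> Hs; elim: n N => [|n IH] N HN.
  case: N HN => [//|N] _; rewrite big_ord_recl /= big1 /=; first lra.
  by move=> i _; rewrite Rmult_0_l.
case: N HN => [//|M] HM.
rewrite (shiftS (fun j => s ^ j)).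
have H1 : \big[Rplus/0]_(j < M) (INR (ee j n) * s ^ j.+1) = s * \big[Rplus/0]_(j < M) (INR (ee j n) * s ^ j).
  rewrite big_distrr; apply: eq_bigr => j _ /=; ring.
have H2 : s * \big[Rplus/0]_(j < M.+1) (INR (ee j.+1 n) * s ^ j) <= (s + / s) ^ n.
  have -> : s * \big[Rplus/0]_(j < M.+1) (INR (ee j.+1 n) * s ^ j) = \big[Rplus/0]_(j < M.+1) (INR (ee j.+1 n) * s ^ j.+1).
    rewrite big_distrr; apply: eq_bigr => j _ /=; ring.
  have HH : INR (ee 0 n) * 1 + \big[Rplus/0]_(j < M.+1) (INR (ee j.+1 n) * s ^ j.+1) <= (s + /s)^n.
    by move: (IH M.+2 (ltnW (ltnW HM))); rewrite big_ord_recl; exact: id.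
  have := pos_INR (ee 0 n); lra.
have H3 := IH M HM.
rewrite H1 /=.
set A := \big[Rplus/0]_(j < M) _ in H3 *.
set B := \big[Rplus/0]_(j < M.+1) _ in H2 *.
have Hi : 0 < / s by apply: Rinv_0_lt_compat.
have HB : B <= / s * (s + / s) ^ n.
  have := Rmult_le_compat_l (/ s) _ _ (Rlt_le _ _ Hi) H2.
  by rewrite -Rmult_assoc Rinv_l ?Rmult_1_l //; lra.
have := Rmult_le_compat_l s _ _ (Rlt_le _ _ Hs) H3.
nra.
Qed.


Section Step.
Variables (p k m : nat).
Hypotheses (pp : prime p) (cpm : coprime p m) (m0 : (0 < m)%N).

Lemma logn_p_pid i d : (d %| m)%N -> logn p (p ^ i * d) = i.
Proof.
move=> dm; have d0 : (0 < d)%N := dvdn_gt0 m0 dm.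
have pi0 : (0 < p ^ i)%N by rewrite expn_gt0 prime_gt0.
rewrite (lognM _ pi0 d0) (pfactorK i pp) logn_coprime ?addn0 //.
exact: coprime_dvdr dm cpm.
Qed.

Lemma logn_q_pid q i d : q \in primes m -> (d %| m)%N -> logn q (p ^ i * d) = logn q d.
Proof.
move=> qm dm; have d0 : (0 < d)%N := dvdn_gt0 m0 dm.
have pi0 : (0 < p ^ i)%N by rewrite expn_gt0 prime_gt0.
rewrite (lognM _ pi0 d0) lognX logn_prime //.
have -> : (q == p) = false.
  apply/negP => /eqP E; move: qm; rewrite mem_primes E => /and3P [_ _ pm].
  by move: cpm; rewrite prime_coprime // pm.
by rewrite muln0.
Qed.

Lemma divisors_perm : perm_eq (divisors (p ^ k * m))
  [seq (p ^ i * d)%N | i <- iota 0 k.+1, d <- divisors m].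
Proof.
have pk0 : (0 < p ^ k * m)%N by rewrite muln_gt0 expn_gt0 prime_gt0.
apply: uniq_perm; first exact: divisors_uniq.
  apply: allpairs_uniq; [exact: iota_uniq | exact: divisors_uniq|].
  move=> [i d] [j d'] H1 H2; case/allpairsP: H1 => [[i1 d1] [/= Hi Hd [Ei Ed]]]; case/allpairsP: H2 => [[j1 d1'] [/= Hj Hd' [Ej Ed']]]; subst => /= E.
  rewrite -dvdn_divisors // in Hd; rewrite -dvdn_divisors // in Hd'.
  have Eij : i1 = j1 by rewrite -(logn_p_pid i1 d1 Hd) -(logn_p_pid j1 d1' Hd') E.
  subst j1; congr (_, _); move: E; move/eqP; rewrite eqn_pmul2l ?expn_gt0 ?prime_gt0 //.
  by move/eqP.
move=> x; rewrite -dvdn_divisors //; apply/idP/allpairsP.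
  move=> xd; have x0 : (0 < x)%N := dvdn_gt0 pk0 xd.
  set i := logn p x.
  exists (i, (x %/ p ^ i)%N); rewrite mem_iota add0n; split.
  - rewrite ltnS; have := dvdn_leq_log p pk0 xd.
    by rewrite (logn_p_pid k m (dvdnn m)).
  - rewrite -dvdn_divisors //.
    have Hd : (x %/ p ^ i %| p ^ k * m)%N.
      apply: (dvdn_trans _ xd); apply: dvdn_div; exact: pfactor_dvdnn.
    rewrite Gauss_dvdr // in Hd.
    apply: coprimeXr; rewrite coprime_sym prime_coprime //.
    apply/negP => pd.
    have : (0 < logn p (x %/ p ^ i))%N.
      rewrite logn_gt0 mem_primes pp pd andbT /=.
      by rewrite divn_gt0 ?expn_gt0 ?prime_gt0 // dvdn_leq // pfactor_dvdnn.
    by rewrite logn_div ?pfactor_dvdnn // pfactorK // subnn.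
  - by rewrite mulnC divnK // pfactor_dvdnn.
move=> [[i d] [Hi Hd ->]].
rewrite mem_iota add0n ltnS in Hi; rewrite /= -dvdn_divisors // in Hd.
by apply: dvdn_mul => //; apply: dvdn_exp2l.
Qed.

Lemma primes_perm : (0 < k)%N -> perm_eq (primes (p ^ k * m)) (p :: primes m).
Proof.
move=> k0; apply: uniq_perm; first exact: primes_uniq.
  rewrite /= primes_uniq andbT mem_primes negb_and; apply/orP; right.
  by rewrite negb_and -prime_coprime // cpm orbT.
have pk0 : (0 < p ^ k)%N by rewrite expn_gt0 prime_gt0.
move=> q; rewrite (primesM _ pk0 m0) (primesX _ k0) (primes_prime pp).
by rewrite !in_cons in_nil orbF.
Qed.

Lemma mult_step (g : nat -> nat -> R) : (0 < k)%N ->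
  \big[Rplus/0]_(d <- divisors m) \big[Rmult/1]_(q <- primes m) g q (logn q d)
  = \big[Rmult/1]_(q <- primes m) \big[Rplus/0]_(i < (logn q m).+1) g q i ->
  \big[Rplus/0]_(d <- divisors (p ^ k * m)) \big[Rmult/1]_(q <- primes (p ^ k * m)) g q (logn q d)
  = \big[Rmult/1]_(q <- primes (p ^ k * m)) \big[Rplus/0]_(i < (logn q (p ^ k * m)).+1) g q i.
Proof.
move=> k0 IH.
have E1 : forall i, \big[Rplus/0]_(d <- divisors m)
     \big[Rmult/1]_(q <- primes (p ^ k * m)) g q (logn q (p ^ i * d))
   = g p i * \big[Rplus/0]_(d <- divisors m) \big[Rmult/1]_(q <- primes m) g q (logn q d).
  move=> i; rewrite big_distrr /=; apply: eq_big_seq => d; rewrite -dvdn_divisors // => dm.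
  rewrite (perm_big _ (primes_perm k0)) big_cons logn_p_pid //; congr (_ * _).
  by apply: eq_big_seq => q qm; rewrite logn_q_pid.
rewrite (perm_big _ divisors_perm) big_allpairs_dep.
rewrite (eq_bigr _ (fun i _ => E1 i)) -big_distrl IH.
rewrite [RHS](perm_big _ (primes_perm k0)) [RHS]big_cons (logn_p_pid k m (dvdnn m)).
have -> : iota 0 k.+1 = index_iota 0 k.+1 by rewrite /index_iota subn0.
rewrite big_mkord; congr (_ * _).
apply: eq_big_seq => q qm; rewrite logn_q_pid //.
Qed.

End Step.

Lemma mult_div (g : nat -> nat -> R) l : (0 < l)%N ->
  \big[Rplus/0]_(d <- divisors l) \big[Rmult/1]_(q <- primes l) g q (logn q d)
  = \big[Rmult/1]_(q <- primes l) \big[Rplus/0]_(i < (logn q l).+1) g q i.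
Proof.
elim: l {-2}l (leqnn l) => [|n IH] l Hl l0; first by move: Hl l0; case: l.
case: (ltngtP l 1) => [|Hl1|El]; first by case: l l0 Hl.
- set p := pdiv l.
  have pp : prime p by apply: pdiv_prime.
  set k := logn p l.
  set m := (l %/ p ^ k)%N.
  have El : l = (p ^ k * m)%N by rewrite mulnC divnK // pfactor_dvdnn.
  have m0 : (0 < m)%N by move: l0; rewrite El muln_gt0 => /andP [].
  have k0 : (0 < k)%N by rewrite logn_gt0 mem_primes pp l0 pdiv_dvd.
  have cpm : coprime p m.
    rewrite prime_coprime //; apply/negP => pm.
    have : (0 < logn p m)%N by rewrite logn_gt0 mem_primes pp m0 pm.
    by rewrite /m logn_div ?pfactor_dvdnn // pfactorK // /k subnn.
  have ml : (m < l)%N.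
    rewrite [X in (_ < X)%N]El -{1}(mul1n m) ltn_pmul2r //.
    by rewrite -(expn0 p) ltn_exp2l ?prime_gt1.
  rewrite El; apply: mult_step => //.
  apply: IH => //; rewrite -ltnS; exact: leq_trans ml Hl.
- by rewrite El /= big_cons !big_nil /= Rplus_0_r.
Qed.


Lemma foldr_sum (I : Type) (F : I -> R) s : foldr Rplus 0 (map F s) = \big[Rplus/0]_(x <- s) F x.
Proof. by rewrite foldrE big_map. Qed.

Lemma foldr_prod (I : Type) (F : I -> R) s : foldr Rmult 1 (map F s) = \big[Rmult/1]_(x <- s) F x.
Proof. by rewrite foldrE big_map. Qed.

Lemma INR_prod (I : Type) (s : seq I) (F : I -> nat) :
  INR (\prod_(i <- s) F i)%N = \big[Rmult/1]_(i <- s) INR (F i).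
Proof. elim: s => [|a s IH]; rewrite ?big_nil ?big_cons //= mult_INR IH //. Qed.

Lemma INR_expn p n : INR (p ^ n)%N = INR p ^ n.
Proof. elim: n => [|n IH]; first by rewrite expn0. by rewrite expnS mult_INR IH. Qed.

Lemma prod_ge0 (I : eqType) (s : seq I) (f : I -> R) :
  (forall i, i \in s -> 0 <= f i) -> 0 <= \big[Rmult/1]_(i <- s) f i.
Proof.
elim: s => [|a s IH] H; rewrite ?big_nil ?big_cons; first lra.
apply: Rmult_le_pos; first by apply: H; rewrite in_cons eqxx.
by apply: IH => i Hi; apply: H; rewrite in_cons Hi orbT.
Qed.

Lemma prod_le (I : eqType) (s : seq I) (f g : I -> R) :
  (forall i, i \in s -> 0 <= f i <= g i) -> \big[Rmult/1]_(i <- s) f i <= \big[Rmult/1]_(i <- s) g i.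
Proof.
elim: s => [|a s IH] H; rewrite ?big_nil ?big_cons; first lra.
have Ha := H a (mem_head _ _).
have Hs : forall i, i \in s -> 0 <= f i <= g i by move=> i Hi; apply: H; rewrite in_cons Hi orbT.
have := IH Hs; have := @prod_ge0 _ s f (fun i Hi => proj1 (Hs i Hi)).
move=> H1 H2; apply: Rmult_le_compat; lra.
Qed.

Lemma dec_div l d : (0 < l)%N -> (d %| l)%N -> d = (\prod_(p <- primes l) p ^ logn p d)%N.
Proof.
move=> l0 dl; have d0 : (0 < d)%N := dvdn_gt0 l0 dl.
rewrite {1}(prod_prime_decomp d0) prime_decompE big_map /=.
rewrite -(perm_big _ (permEl (perm_filterC (mem (primes d)) (primes l)))) big_cat /=.
rewrite [X in (_ * X)%N]big1_seq ?muln1; last first.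
  move=> p; rewrite mem_filter /= => /andP [/negP pd _].
  have -> : logn p d = 0%N.
    by apply/eqP; rewrite -leqn0 leqNgt logn_gt0; apply/negP.
  by rewrite expn0.
apply: perm_big; apply: uniq_perm; [exact: primes_uniq | exact: filter_uniq (primes_uniq l)|].
move=> p; rewrite mem_filter /=; apply/idP/andP => [pd|[] //]; split => //.
move: pd; rewrite !mem_primes l0 => /and3P [-> _ pd] /=.
exact: dvdn_trans pd dl.
Qed.

Lemma sqrt_dec l d : (0 < l)%N -> (d %| l)%N ->
  sqrt (INR d) = \big[Rmult/1]_(p <- primes l) sqrt (INR p) ^ logn p d.
Proof.
move=> l0 dl; apply: sqrt_lem_1; first exact: pos_INR.
  apply: prod_ge0 => p _; apply: pow_le; exact: sqrt_pos.
rewrite -big_split /= {3}(dec_div l d l0 dl) INR_prod; apply: eq_bigr => p _.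
rewrite INR_expn -Rpow_mult_distr sqrt_sqrt //; exact: pos_INR.
Qed.

Lemma term_le1 l : (0 < l)%N -> INR l / INR (nu l) ^ 2 * inner_sum l ^ 2 <= 1.
Proof.
move=> l0.
set sp := fun p => sqrt (INR p).
have sp0 : forall p, p \in primes l -> 0 < sp p.
  move=> p; rewrite mem_primes => /andP [pp _]; apply: sqrt_lt_R0.
  apply: lt_0_INR; apply/ltP; exact: prime_gt0.
have Hinner : inner_sum l = \big[Rmult/1]_(p <- primes l)
    \big[Rplus/0]_(i < (logn p l).+1) (INR (ee i (logn p l)) * sp p ^ i).
  rewrite /inner_sum foldr_sum -(mult_div (fun p i => INR (ee i (logn p l)) * sp p ^ i) l l0).
  apply: eq_big_seq => d; rewrite -dvdn_divisors // => dl.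
  rewrite /c_ell foldr_prod (sqrt_dec l d l0 dl) -big_split /=.
  by apply: eq_bigr => p _; rewrite cheb_ee.
have HP : INR l = \big[Rmult/1]_(p <- primes l) INR p ^ logn p l.
  rewrite {1}(dec_div l l l0 (dvdnn l)) INR_prod; apply: eq_bigr => p _; exact: INR_expn.
have HQ : INR (nu l) = \big[Rmult/1]_(p <- primes l) (INR p + 1) ^ logn p l.
  rewrite /nu INR_prod; apply: eq_bigr => p _; by rewrite INR_expn S_INR.
set B := \big[Rmult/1]_(p <- primes l) (sp p + / sp p) ^ logn p l.
have HI : 0 <= inner_sum l <= B.
  rewrite Hinner; split.
    apply: prod_ge0 => p pl; apply: big_ge0 => i; apply: Rmult_le_pos; first exact: pos_INR.
    apply: pow_le; exact: Rlt_le (sp0 p pl).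
  apply: prod_le => p pl; split.
    apply: big_ge0 => i; apply: Rmult_le_pos; first exact: pos_INR.
    apply: pow_le; exact: Rlt_le (sp0 p pl).
  exact: G_bound (sp0 p pl) (ltnSn _).
have HBPQ : B * B * INR l = INR (nu l) * INR (nu l).
  rewrite HP HQ /B -!big_split /=; apply: eq_big_seq => p pl.
  rewrite -!Rpow_mult_distr; congr (_ ^ _).
  have sq : sp p * sp p = INR p by rewrite /sp sqrt_sqrt //; exact: pos_INR.
  rewrite -sq; have := sp0 p pl; move=> H; field; lra.
have P0 : 0 < INR l by apply: lt_0_INR; apply/ltP.
have Q0 : 0 < INR (nu l).
  rewrite HQ; apply: (@big_ind _ (fun x => 0 < x)) => //; [lra | move=> x y; nra |].
  move=> p _; apply: pow_lt; have := pos_INR p; lra.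
rewrite /Rdiv.
have iQ : / INR (nu l) ^ 2 * (INR (nu l) ^ 2) = 1 by field; lra.
have iQ0 : 0 < / INR (nu l) ^ 2 by apply: Rinv_0_lt_compat; apply: pow_lt.
have H2 : INR l * inner_sum l ^ 2 <= INR (nu l) ^ 2.
  have : inner_sum l ^ 2 <= B ^ 2 by apply: pow_incr.
  move=> H; have := Rmult_le_compat_l _ _ _ (Rlt_le _ _ P0) H.
  have -> : INR l * B ^ 2 = INR (nu l) ^ 2 by transitivity (B * B * INR l); [ring | rewrite HBPQ; ring].
  done.
have := Rmult_le_compat_l _ _ _ (Rlt_le _ _ iQ0) H2.
rewrite iQ => H3.
have -> : INR l * / INR (nu l) ^ 2 * inner_sum l ^ 2 = / INR (nu l) ^ 2 * (INR l * inner_sum l ^ 2) by ring.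
done.
Qed.


Lemma sub_sum (I : eqType) (s t : seq I) (F : I -> R) :
  uniq s -> uniq t -> {subset s <= t} -> (forall x, 0 <= F x) ->
  \big[Rplus/0]_(x <- s) F x <= \big[Rplus/0]_(x <- t) F x.
Proof.
move=> us ut st F0.
rewrite -[X in _ <= X](perm_big _ (permEl (perm_filterC (mem s) t))) big_cat /=.
have -> : \big[Rplus/0]_(x <- [seq x <- t | mem s x]) F x = \big[Rplus/0]_(x <- s) F x.
  apply: perm_big; apply: uniq_perm; [exact: filter_uniq | done |].
  move=> x; rewrite mem_filter /=; apply/andP/idP => [[] //| xs]; split => //; exact: st.
rewrite -[X in X <= _]Rplus_0_r; apply: Rplus_le_compat_l; exact: big_ge0.
Qed.

Lemma geom_le q N : 0 <= q < 1 -> \big[Rplus/0]_(i < N) q ^ i <= / (1 - q).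
Proof.
move=> Hq.
have E : (1 - q) * \big[Rplus/0]_(i < N) q ^ i = 1 - q ^ N.
  elim: N => [|N IH]; first by rewrite big_ord0 /=; ring.
  rewrite big_ord_recr /= Rmult_plus_distr_l IH /=; ring.
have Hp : 0 < 1 - q by lra.
have HqN : 0 <= q ^ N by apply: pow_le; lra.
have -> : \big[Rplus/0]_(i < N) q ^ i = / (1 - q) * ((1 - q) * \big[Rplus/0]_(i < N) q ^ i).
  field; lra.
rewrite E; have := Rinv_0_lt_compat _ Hp; nra.
Qed.

Lemma exp_le x y : x <= y -> exp x <= exp y.
Proof. case=> [H|->]; [left; exact: exp_increasing | lra]. Qed.

Lemma ln_le x y : 0 < x -> x <= y -> ln x <= ln y.
Proof. move=> H; case=> [H'|->]; [left; exact: ln_increasing | lra]. Qed.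

Lemma exp_ge1 x : 0 <= x -> 1 <= exp x.
Proof. have := exp_ineq1_le x; lra. Qed.

Lemma Rpower_1l e : Rpower 1 e = 1.
Proof. by rewrite /Rpower ln_1 Rmult_0_r exp_0. Qed.

Lemma Rpower_powl x n e : 0 < x -> Rpower (x ^ n) e = Rpower x e ^ n.
Proof.
move=> x0; elim: n => [|n IH] /=; first exact: Rpower_1l.
rewrite -IH Rpower_mult_distr //; apply: pow_lt => //.
Qed.

Lemma prod_gt0 (I : eqType) (s : seq I) (f : I -> R) :
  (forall i, i \in s -> 0 < f i) -> 0 < \big[Rmult/1]_(i <- s) f i.
Proof.
elim: s => [|a s IH] H; rewrite ?big_nil ?big_cons; first lra.
apply: Rmult_lt_0_compat; first by apply: H; rewrite in_cons eqxx.
by apply: IH => i Hi; apply: H; rewrite in_cons Hi orbT.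
Qed.

Lemma Rpower_prod (s : seq nat) (x : nat -> R) e : (forall i, i \in s -> 0 < x i) ->
  Rpower (\big[Rmult/1]_(i <- s) x i) e = \big[Rmult/1]_(i <- s) Rpower (x i) e.
Proof.
elim: s => [|a s IH] H; rewrite ?big_nil ?big_cons; first exact: Rpower_1l.
have Hs : forall i, i \in s -> 0 < x i by move=> i Hi; apply: H; rewrite in_cons Hi orbT.
rewrite -IH // Rpower_mult_distr //; first by apply: H; rewrite in_cons eqxx.
exact: prod_gt0.
Qed.

Lemma prime_INR_gt1 p : prime p -> 1 < INR p.
Proof. move=> pp; apply: lt_1_INR; apply/ltP; exact: prime_gt1. Qed.

Lemma Rpower_div l d e : (0 < l)%N -> (d %| l)%N ->
  Rpower (INR d) e = \big[Rmult/1]_(p <- primes l) Rpower (INR p) e ^ logn p d.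
Proof.
move=> l0 dl; rewrite {1}(dec_div l d l0 dl) INR_prod Rpower_prod.
  apply: eq_big_seq => p; rewrite mem_primes => /andP [pp _].
  rewrite INR_expn Rpower_powl //; have := prime_INR_gt1 p pp; lra.
move=> p; rewrite mem_primes => /andP [pp _].
rewrite INR_expn; apply: pow_lt; have := prime_INR_gt1 p pp; lra.
Qed.

Lemma size_sum (I : Type) (s : seq I) : INR (size s) = \big[Rplus/0]_(x <- s) 1.
Proof.
elim: s => [|a s IH]; first by rewrite big_nil.
rewrite big_cons -IH; change (size (a :: s)) with (size s).+1; rewrite S_INR; ring.
Qed.

Lemma ord_sum1 n : \big[Rplus/0]_(i < n) 1 = INR n.
Proof.
elim: n => [|n IH]; first by rewrite big_ord0.
rewrite big_ord_recr IH S_INR //.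
Qed.

Lemma tau_bound L : (0 < L)%N -> \big[Rmult/1]_(p <- primes L) 2 <= INR (tau L).
Proof.
move=> L0; rewrite /tau size_sum.
have -> : \big[Rplus/0]_(x <- divisors L) 1 =
  \big[Rplus/0]_(d <- divisors L) \big[Rmult/1]_(q <- primes L) (fun _ _ => 1) q (logn q d).
  by apply: eq_bigr => d _; rewrite big1.
rewrite (mult_div (fun _ _ => 1) L L0); apply: prod_le => p pL; split; first lra.
rewrite ord_sum1 S_INR.
have : (0 < logn p L)%N by rewrite logn_gt0.
move=> H; have : 1 <= INR (logn p L) by apply: (le_INR 1); apply/leP.
lra.
Qed.


Lemma sum_le (I : eqType) (s : seq I) (f g : I -> R) :
  (forall i, i \in s -> f i <= g i) -> \big[Rplus/0]_(i <- s) f i <= \big[Rplus/0]_(i <- s) g i.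
Proof.
elim: s => [|a s IH] H; rewrite ?big_nil ?big_cons; first lra.
apply: Rplus_le_compat; first by apply: H; rewrite in_cons eqxx.
by apply: IH => i Hi; apply: H; rewrite in_cons Hi orbT.
Qed.

Lemma q_bounds e p : 0 < e -> prime p ->
  0 < Rpower (INR p) (- e) < 1 /\ Rpower (INR p) (- e) <= Rpower 2 (- e).
Proof.
move=> e0 pp; have p1 := prime_INR_gt1 p pp.
have lp : 0 < ln (INR p) by rewrite -ln_1; apply: ln_increasing; lra.
have p2 : 2 <= INR p by apply: (le_INR 2); apply/leP; exact: prime_gt1.
have l2 : ln 2 <= ln (INR p) by apply: ln_le; lra.
rewrite /Rpower; split; first split; first exact: exp_pos.
  rewrite -exp_0; apply: exp_increasing; nra.
apply: exp_le; nra.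
Qed.

Lemma q_small e p : 0 < e -> (Z.to_nat (up (exp (ln 2 / e))) <= p)%N ->
  Rpower (INR p) (- e) <= / 2.
Proof.
move=> e0 Hp.
have [H1 _] := archimed (exp (ln 2 / e)).
have Hpos := exp_pos (ln 2 / e).
have Hz : (0 <= up (exp (ln 2 / e)))%Z.
  apply: Z.lt_le_incl; apply: lt_IZR; lra.
have HP : exp (ln 2 / e) < INR p.
  apply: (Rlt_le_trans _ _ _ H1).
  rewrite -(Z2Nat.id _ Hz) -INR_IZR_INZ; apply: le_INR; apply/leP; exact: Hp.
have Hl : ln 2 / e < ln (INR p) by rewrite -{1}(ln_exp (ln 2 / e)); apply: ln_increasing.
have Hl2 : ln 2 < e * ln (INR p).
  have -> : ln 2 = e * (ln 2 / e) by field; lra.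
  apply: Rmult_lt_compat_l => //.
rewrite /Rpower -(exp_ln 2) ?(Rlt_le _ _ Rlt_0_2) //; last lra.
rewrite -exp_Ropp; apply: exp_le; lra.
Qed.

Lemma prod_h (s : seq nat) P0 B :
  \big[Rmult/1]_(p <- s) (if (p < P0)%N then B else 1) = B ^ count (fun p => p < P0)%N s.
Proof.
elim: s => [|a s IH]; first by rewrite big_nil.
rewrite big_cons IH /=; case: ifP => _; rewrite ?add1n ?add0n //=; ring.
Qed.

Lemma count_le (s : seq nat) P0 : uniq s -> (count (fun p => p < P0)%N s <= P0)%N.
Proof.
move=> us; rewrite -size_filter -[X in (_ <= X)%N](size_iota 0 P0).
apply: uniq_leq_size; first exact: filter_uniq.
by move=> x; rewrite mem_filter mem_iota /= add0n => /andP [-> _].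
Qed.


Lemma ell_mem L Y l : (0 < L)%N -> l \in ell_range L Y ->
  [/\ (0 < l)%N, INR l <= Y & (l %| L ^ Z.to_nat (up Y))%N].
Proof.
move=> L0; rewrite /ell_range mem_filter => /andP [/andP [Hdiv Hle] Hiota].
rewrite mem_iota in Hiota; move: Hiota => /andP [l0 lU].
have Hle' : INR l <= Y by move: Hle; case: Rle_dec.
split => //.
apply/dvdn_partP => // p pl.
have : p \in primes l by exact: pl.
rewrite mem_primes => /and3P [pp _ pdl].
have pL : (p %| L)%N by move/allP: Hdiv; apply.
rewrite p_part pfactor_dvdn //; last by rewrite expn_gt0 L0.
rewrite lognX.
have h1 : (0 < logn p L)%N by rewrite logn_gt0 mem_primes pp L0 pL.
have h2 := ltn_logl p l0.
nia.
Qed.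

Theorem lemma6p2 :
  forall eps : R, 0 < eps ->
  exists C : R, forall (L : nat), (0 < L)%N -> forall Y : R, 1 <= Y ->
    S_sum L Y <= C * Rpower Y eps * INR (tau L).
Proof.
move=> eps e0.
set q := fun p => Rpower (INR p) (- eps).
set B := / (1 - Rpower 2 (- eps)).
set P0 := Z.to_nat (up (exp (ln 2 / eps))).
have [q2a q2b] : 0 < Rpower 2 (- eps) < 1.
  have E2 : INR 2 = 2 by rewrite /=; lra.
  have := q_bounds eps 2 e0 (isT : prime 2); rewrite E2 => [[[a b] _]]; split; lra.
have B1 : 1 <= B.
  rewrite /B -Rinv_1; apply: Rinv_le_contravar; lra.
exists (B ^ P0) => L L0 Y HY.
set U := Z.to_nat (up Y).
have U0 : (0 < U)%N.
  have [H1 _] := archimed Y.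
  have : (1 < up Y)%Z by apply: lt_IZR; lra.
  rewrite /U; lia.
set M := (L ^ U)%N.
have M0 : (0 < M)%N by rewrite expn_gt0 L0.
have Y0 : 0 < Rpower Y eps by exact: exp_pos.
have q0 : forall p, 0 <= q p by move=> p; left; exact: exp_pos.
have S1 : S_sum L Y <= Rpower Y eps * \big[Rplus/0]_(l <- ell_range L Y) q l.
  rewrite /S_sum foldr_sum big_distrr; apply: sum_le => l Hl.
  have [l0 lY _] := ell_mem L Y l L0 Hl.
  apply: (Rle_trans _ 1); first exact: term_le1.
  have lpos : 0 < INR l by apply: lt_0_INR; apply/ltP.
  rewrite /q /Rpower /= -exp_plus; apply: exp_ge1.
  have := ln_le (INR l) Y lpos lY; nra.
have S3 : \big[Rplus/0]_(l <- ell_range L Y) q l <= \big[Rplus/0]_(d <- divisors M) q d.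
  apply: sub_sum => //; first by apply: filter_uniq; exact: iota_uniq.
    exact: divisors_uniq.
  move=> l Hl; have [_ _ lM] := ell_mem L Y l L0 Hl; by rewrite -dvdn_divisors.
have S4 : \big[Rplus/0]_(d <- divisors M) q d =
    \big[Rmult/1]_(p <- primes M) \big[Rplus/0]_(i < (logn p M).+1) q p ^ i.
  rewrite -(mult_div (fun p i => q p ^ i) M M0).
  apply: eq_big_seq => d; rewrite -dvdn_divisors // => dM.
  by rewrite /q (Rpower_div M d (- eps) M0 dM).
have PM : primes M = primes L by rewrite /M primesX.
have S5 : \big[Rmult/1]_(p <- primes M) \big[Rplus/0]_(i < (logn p M).+1) q p ^ i <=
    \big[Rmult/1]_(p <- primes L) (2 * (if (p < P0)%N then B else 1)).
  rewrite PM; apply: prod_le => p pL.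
  have pp : prime p by move: pL; rewrite mem_primes => /andP [].
  have [[qa qb] qc] := q_bounds eps p e0 pp.
  split; first by apply: big_ge0 => i; apply: pow_le; exact: q0.
  apply: (Rle_trans _ (/ (1 - q p))); first by apply: geom_le; rewrite /q /=; lra.
  case: ifP => HP.
    apply: (Rle_trans _ B); last lra.
    rewrite /B; apply: Rinv_le_contravar; rewrite /q /=; lra.
  have qs : q p <= / 2 by apply: q_small => //; rewrite leqNgt HP.
  rewrite Rmult_1_r -(Rinv_inv 2); apply: Rinv_le_contravar; lra.
have S6 : \big[Rmult/1]_(p <- primes L) (2 * (if (p < P0)%N then B else 1)) <= INR (tau L) * B ^ P0.
  rewrite big_split /= prod_h.
  apply: Rmult_le_compat.
  - apply: prod_ge0 => *; lra.
  - apply: pow_le; lra.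
  - exact: tau_bound.
  - apply: Rle_pow => //; apply/leP; apply: count_le; exact: primes_uniq.
have Hsum0 : 0 <= \big[Rplus/0]_(l <- ell_range L Y) q l by apply: big_ge0.
have := Rmult_le_compat_l _ _ _ (Rlt_le _ _ Y0) (Rle_trans _ _ _ S3 (Rle_trans _ _ _ (Req_le _ _ S4) (Rle_trans _ _ _ S5 S6))).
move=> H; apply: (Rle_trans _ _ _ S1); apply: (Rle_trans _ _ _ H); right; ring.
Qed.
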